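(* Let $\mathcal{R}=\{P_1,\dots,P_n\}$ be a set of $n$ pairwise disjoint, connected, $\alpha$-fat simple polygons in the plane. Let $R_0$ be a minimum-diameter axis-aligned rectangle that intersects or contains every region $P_i$, and let $D$ be the diameter of $R_0$. Let $L^*$ be the length of an optimal tour of $\mathcal{R}$. Then $2D\le L^*\le nD$.
   Context: A region $P$ is $\alpha$-fat (for a fixed constant $\alpha>0$) if $\mathrm{area}(P)\ge \alpha\,[\mathrm{diam}(P)]^2$. A tour of $\mathcal{R}$ is a closed curve in the plane that intersects every region $P_i$; its length is its Euclidean length. $L^*$ is the minimum length of a tour of $\mathcal{R}$. *)

(* Defs.v *)
From HB Require Import structures.
From mathcomp Require Import all_boot all_order all_algebra.
From mathcomp Require Import all_classical all_reals all_analysis.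
Set Implicit Arguments. Unset Strict Implicit. Unset Printing Implicit Defensive.
Import Order.TTheory GRing.Theory Num.Theory.
Import numFieldNormedType.Exports.
Local Open Scope classical_set_scope.
Local Open Scope ring_scope.

Section Plane.
Variable R : realType.
Notation pt := (R * R)%type.

Definition edist (p q : pt) : R :=
  Num.sqrt ((p.1 - q.1) ^+ 2 + (p.2 - q.2) ^+ 2).

Definition diam (A : set pt) : R :=
  sup [set edist p q | p in A & q in A].

Definition area (A : set pt) : \bar R :=
  ((@lebesgue_measure R) \x (@lebesgue_measure R))%E A.

Definition fat (alpha : R) (A : set pt) : Prop :=
  ((alpha * diam A ^+ 2)%:E <= area A)%E.

Definition segment (p q : pt) : set pt :=
  [set ((1 - t) * p.1 + t * q.1, (1 - t) * p.2 + t * q.2) | t in `[0, 1]%classic].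

(* edges of the closed polygonal chain v_0 v_1 ... v_{m-1} v_0 *)
Definition pedge (m : nat) (v : 'I_m -> pt) (i : 'I_m) : set pt :=
  segment (v i) (v (ordS i)).

Definition simple_chain (m : nat) (v : 'I_m -> pt) : Prop :=
  (3 <= m)%N /\ injective v /\
  forall i j : 'I_m, i != j ->
    pedge v i `&` pedge v j =
      if j == ordS i then [set v j]
      else if i == ordS j then [set v i]
      else set0.

Definition chain_image (m : nat) (v : 'I_m -> pt) : set pt :=
  \bigcup_(i in [set: 'I_m]) pedge v i.

(* a simple polygon (as a closed region): a compact set, equal to the closure
   of its interior, whose topological boundary is a simple closed polygonal
   chain *)
Definition simple_polygon (P : set pt) : Prop :=
  exists (m : nat) (v : 'I_m -> pt),
    simple_chain v /\ compact P /\ P = closure (interior P) /\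
    closure P `\` interior P = chain_image v.

(* closed axis-aligned rectangle [a1,b1] x [a2,b2] (possibly degenerate) *)
Definition arect (a1 b1 a2 b2 : R) : set pt :=
  [set p | a1 <= p.1 <= b1 /\ a2 <= p.2 <= b2].

Definition is_arect (Q : set pt) : Prop :=
  exists a1 b1 a2 b2, a1 <= b1 /\ a2 <= b2 /\ Q = arect a1 b1 a2 b2.

Definition curve_length (g : R -> pt) : \bar R :=
  ereal_sup [set x | exists (k : nat) (t : nat -> R),
     [/\ t 0%N = 0, t k = 1, (forall i, (i < k)%N -> t i <= t i.+1) &
          x = (\sum_(i < k) edist (g (t i)) (g (t i.+1)))%:E]].

Definition is_tour (n : nat) (P : 'I_n -> set pt) (g : R -> pt) : Prop :=
  {within `[0, 1], continuous g} /\ g 0 = g 1 /\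
  forall i, exists2 t, t \in `[0, 1] & P i (g t).

Definition opt_tour_length (n : nat) (P : 'I_n -> set pt) : \bar R :=
  ereal_inf [set curve_length g | g in is_tour P].

End Plane.

(* Main.v *)
Require Import Defs.
From HB Require Import structures.
From mathcomp Require Import all_boot all_order all_algebra.
From mathcomp Require Import all_classical all_reals all_analysis.
From mathcomp Require Import ring lra.
Import Order.TTheory GRing.Theory Num.Theory.
Import numFieldNormedType.Exports.
Local Open Scope classical_set_scope.
Local Open Scope ring_scope.

Local Notation edist := Defs.edist.
Section Aux.
Variable R : realType.

Definition nrm (a b : R) := Num.sqrt (a ^+ 2 + b ^+ 2).

Lemma nrm_ge0 a b : 0 <= nrm a b.
Proof. exact: sqrtr_ge0. Qed.

Lemma nrm_sq a b : nrm a b ^+ 2 = a ^+ 2 + b ^+ 2.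
Proof. by rewrite sqr_sqrtr // addr_ge0 // sqr_ge0. Qed.

Lemma nrm_tri a b c d : nrm (a + c) (b + d) <= nrm a b + nrm c d.
Proof.
have h1 := nrm_ge0 a b; have h2 := nrm_ge0 c d.
have e1 := nrm_sq a b; have e2 := nrm_sq c d.
rewrite -(ler_pXn2r (n:=2)) //; last by rewrite nnegrE addr_ge0.
  rewrite nrm_sq.
  have hp : (nrm a b * nrm c d) ^+ 2 = (a^+2 + b^+2) * (c^+2 + d^+2) by rewrite exprMn e1 e2.
  have hp0 : 0 <= nrm a b * nrm c d by rewrite mulr_ge0.
  have hs : a * c + b * d <= nrm a b * nrm c d.
    have hq : (a * c + b * d) ^+ 2 <= (nrm a b * nrm c d) ^+ 2.
      rewrite hp; have := sqr_ge0 (a * d - b * c); lra.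
    case: (lerP (a * c + b * d) 0) => hneg; first lra.
    by rewrite -(ler_pXn2r (n:=2)) // nnegrE ltW.
  have -> : (nrm a b + nrm c d) ^+ 2 = nrm a b ^+ 2 + nrm c d ^+ 2 + 2 * (nrm a b * nrm c d) by ring.
  rewrite e1 e2; lra.
by rewrite nnegrE nrm_ge0.
Qed.

Lemma nrm_abs a b : nrm `|a| `|b| = nrm a b.
Proof. by rewrite /nrm !real_normK ?num_real. Qed.

Lemma nrm_le a b c d : 0 <= a -> 0 <= b -> a <= c -> b <= d -> nrm a b <= nrm c d.
Proof.
move=> ha hb hac hbd; rewrite /nrm ler_sqrt; last by rewrite addr_ge0 // sqr_ge0.
apply: lerD; rewrite ler_pXn2r // nnegrE; lra.
Qed.

Lemma nrm_scale k a b : nrm (k * a) (k * b) = `|k| * nrm a b.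
Proof.
rewrite /nrm !exprMn -mulrDr sqrtrM ?sqr_ge0 //.
by rewrite sqrtr_sqr.
Qed.

Lemma nrm_sum (I : Type) (r : seq I) (F G : I -> R) :
  nrm (\sum_(i <- r) F i) (\sum_(i <- r) G i) <= \sum_(i <- r) nrm (F i) (G i).
Proof.
elim: r => [|x r IH]; first by rewrite !big_nil /nrm expr0n /= addr0 sqrtr0.
rewrite !big_cons; apply: le_trans (nrm_tri _ _ _ _) _; exact: lerD.
Qed.


Lemma edistE (p q : R * R) : edist p q = nrm (p.1 - q.1) (p.2 - q.2).
Proof. by []. Qed.

Lemma len_lip (g : R -> R * R) K :
  (forall s t, s <= t -> edist (g s) (g t) <= K * (t - s)) ->
  (curve_length g <= K%:E)%E.
Proof.
move=> hg; apply: ge_ereal_sup => x [k [t [t0 tk mono ->]]].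
rewrite lee_fin.
apply: le_trans (_ : \sum_(i < k) K * (t i.+1 - t i) <= _).
  apply: ler_sum => i _; apply: hg; exact: mono.
rewrite -mulr_sumr -(big_mkord xpredT (fun i => t i.+1 - t i)) telescope_sumr //.
by rewrite tk t0 subr0 mulr1.
Qed.

Lemma len_part (g : R -> R * R) k (t : nat -> R) :
  t 0%N = 0 -> t k = 1 -> (forall i, (i < k)%N -> t i <= t i.+1) ->
  ((\sum_(i < k) edist (g (t i)) (g (t i.+1)))%:E <= curve_length g)%E.
Proof.
move=> t0 tk mono; apply: ereal_sup_ubound; exists k, t; split => //.
Qed.

Lemma var1 (u : nat -> R) m n : (m <= n)%N ->
  `|u n - u m| <= \sum_(m <= i < n) `|u i.+1 - u i|.
Proof.
elim: n => [|n IH]; first by rewrite leqn0 => /eqP ->; rewrite big_geq // subrr normr0.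
rewrite leq_eqVlt => /orP [/eqP ->|]; first by rewrite big_geq // subrr normr0.
rewrite ltnS => hmn; rewrite big_nat_recr //=.
apply: le_trans (_ : `|u n - u m| + `|u n.+1 - u n| <= _); last by rewrite lerD2r IH.
have -> : u n.+1 - u m = (u n - u m) + (u n.+1 - u n) by ring.
exact: ler_normD.
Qed.

Lemma var2 (u : nat -> R) k a b : (a <= k)%N -> (b <= k)%N -> u 0%N = u k ->
  2 * `|u b - u a| <= \sum_(0 <= i < k) `|u i.+1 - u i|.
Proof.
wlog hab : a b / (a <= b)%N.
  move=> W ha hb hu; case: (leqP a b) => h; first exact: W.
  by rewrite distrC; apply: W => //; exact: ltnW.
move=> ha hb hu.
rewrite (@big_cat_nat _ _ _ a) ?(leq_trans hab) //= (@big_cat_nat _ _ _ b a) //=.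
have h1 := @var1 u 0 a (leq0n a); have h2 := @var1 u a b hab; have h3 := @var1 u b k hb.
have h4 : `|u b - u a| <= `|u a - u 0%N| + `|u k - u b|.
  have e : u b - u a = (u k - u a) + (u b - u k) by ring.
  rewrite hu (distrC (u a)) (distrC (u k) (u b)) e; exact: ler_normD.
lra.
Qed.

Lemma lip_cont (f : R -> R) K : 
  (forall s t, `|f s - f t| <= K * `|s - t|) -> continuous f.
Proof.
move=> hf x; apply/cvgrPdist_le => e e0.
have hK : 0 <= K.
  have := hf 0 1; rewrite sub0r normrN normr1 mulr1; apply: le_trans; exact: normr_ge0.
have hK1 : 0 < K + 1 by lra.
near=> y.
apply: le_trans (hf _ _) _.
suff : `|x - y| <= e / (K + 1).
  move=> h; apply: le_trans (ler_wpM2l hK h) _.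
  rewrite mulrA ler_pdivrMr //; nra.
near: y; apply/nbhs_normP; exists (e / (K + 1)); first by rewrite /= divr_gt0.
by move=> y /= hy; apply: ltW.
Unshelve. all: by end_near.

Qed.


Lemma pair_cont (f h : R -> R) : continuous f -> continuous h ->
  continuous (fun s => (f s, h s)).
Proof. by move=> cf ch x; exact: (cvg_pair (cf x) (ch x)). Qed.

Lemma fst_cont : continuous (fun p : R * R => p.1).
Proof. by move=> [a b]; apply: (@cvg_fst _ _ (nbhs a) (nbhs b)). Qed.
Lemma snd_cont : continuous (fun p : R * R => p.2).
Proof. by move=> [a b]; apply: (@cvg_snd _ _ (nbhs a) (nbhs b)). Qed.

Lemma within_fst (g : R -> R * R) (A : set R) :
  {within A, continuous g} -> {within A, continuous (fun t => (g t).1)}.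
Proof. move=> hg x; exact: (@continuous_comp _ _ _ (from_subspace A g) (fun p : R * R => p.1) x (hg x) (fst_cont _)). Qed.
Lemma within_snd (g : R -> R * R) (A : set R) :
  {within A, continuous g} -> {within A, continuous (fun t => (g t).2)}.
Proof. move=> hg x; exact: (@continuous_comp _ _ _ (from_subspace A g) (fun p : R * R => p.2) x (hg x) (snd_cont _)). Qed.


Lemma rect_dist a1 b1 a2 b2 (p q : R * R) :
  arect a1 b1 a2 b2 p -> arect a1 b1 a2 b2 q -> edist p q <= nrm (b1 - a1) (b2 - a2).
Proof.
rewrite /arect /= => -[/andP[hp1 hp1'] /andP[hp2 hp2']] [/andP[hq1 hq1'] /andP[hq2 hq2']].
rewrite edistE -nrm_abs; apply: nrm_le; rewrite ?normr_ge0 // ler_norml; apply/andP; split; lra.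
Qed.

Lemma diam_rect_le a1 b1 a2 b2 : a1 <= b1 -> a2 <= b2 ->
  diam (arect a1 b1 a2 b2) <= nrm (b1 - a1) (b2 - a2).
Proof.
move=> h1 h2; apply: ge_sup.
  exists (edist (a1, a2) (a1, a2)); exists (a1, a2); first by rewrite /arect /= !lexx h1 h2.
  by exists (a1, a2) => //; rewrite /arect /= !lexx h1 h2.
by move=> _ [p hp [q hq <-]]; apply: rect_dist.
Qed.

Lemma rect_le_diam a1 b1 a2 b2 (p q : R * R) :
  arect a1 b1 a2 b2 p -> arect a1 b1 a2 b2 q -> edist p q <= diam (arect a1 b1 a2 b2).
Proof.
move=> hp hq; apply: ub_le_sup.
  by exists (nrm (b1 - a1) (b2 - a2)) => _ [x hx [y hy <-]]; apply: rect_dist.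
by exists p => //; exists q.
Qed.


Lemma low (g : R -> R * R) : {within `[0, 1], continuous g} -> g 0 = g 1 ->
  exists x1 x2 y1 y2, [/\ x1 <= x2, y1 <= y2,
    (forall t, t \in `[0, 1] -> arect x1 x2 y1 y2 (g t)) &
    ((2 * nrm (x2 - x1) (y2 - y1))%:E <= curve_length g)%E].
Proof.
move=> hg g01.
have h01 : (0:R) <= 1 by [].
have [ta ta01 hta] := EVT_min h01 (@within_fst g _ hg).
have [tb tb01 htb] := EVT_max h01 (@within_fst g _ hg).
have [tc tc01 htc] := EVT_min h01 (@within_snd g _ hg).
have [td td01 htd] := EVT_max h01 (@within_snd g _ hg).
exists (g ta).1, (g tb).1, (g tc).2, (g td).2; split.
- exact: hta.
- exact: htc.
- by move=> t ht; rewrite /arect /= hta // htb // htc // htd.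
set l := [:: ta; tb; tc; td].
have hl : all (fun x => x \in `[0, 1]) l by rewrite /= ta01 tb01 tc01 td01.
set s := 0 :: rcons (sort <=%R l) 1.
have hsz : size s = 6%N by rewrite /= size_rcons size_sort.
have hsort : sorted <=%R s.
  rewrite /s /= rcons_path path_sortedE; last exact: le_trans.
  rewrite sort_sorted; last exact: le_total.
  rewrite all_sort andbT; apply/andP; split.
    by apply/allP => x /(allP hl); rewrite in_itv /= => /andP[].
  have : last 0 (sort <=%R l) \in 0 :: sort <=%R l by apply: mem_last.
  rewrite in_cons => /orP[/eqP -> //|]; rewrite mem_sort => /(allP hl).
  by rewrite in_itv /= => /andP[].
set t := fun i => nth 0 s i.
have t0 : t 0%N = 0 by [].
have t5 : t 5%N = 1 by rewrite /t /= nth_rcons size_sort.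
have mono : forall i, (i < 5)%N -> t i <= t i.+1.
  move=> i hi; apply: (sorted_leq_nth le_trans lexx 0 hsort); rewrite ?inE ?hsz //.
  by apply: leq_trans hi _.
apply: le_trans (@len_part g 5 t t0 t5 mono).

rewrite lee_fin.
set ux := fun i => (g (t i)).1.
set uy := fun i => (g (t i)).2.
have -> : \sum_(i < 5) edist (g (t i)) (g (t i.+1)) =
          \sum_(i < 5) nrm `|ux i.+1 - ux i| `|uy i.+1 - uy i|.
  apply: eq_bigr => i _; rewrite edistE -nrm_abs /ux /uy.
  by rewrite (distrC (g (t i)).1) (distrC (g (t i)).2).

apply: le_trans (nrm_sum _ _ _ _).
have mems : forall x, x \in l -> x \in s.
  by move=> x hx; rewrite /s in_cons mem_rcons in_cons mem_sort hx !orbT.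
have idx : forall x, x \in l -> (index x s <= 5)%N /\ t (index x s) = x.
  move=> x /mems hx; split; first by rewrite -ltnS -hsz index_mem.
  exact: nth_index.
have u05 : forall u : R * R -> R, u (g (t 0%N)) = u (g (t 5%N)) by move=> u; rewrite t0 t5 g01.
have [ia [iat]] : (index ta s <= 5)%N /\ t (index ta s) = ta by apply: idx; rewrite inE eqxx.
have [ib [ibt]] : (index tb s <= 5)%N /\ t (index tb s) = tb by apply: idx; rewrite !inE eqxx orbT.
have [ic [ict]] : (index tc s <= 5)%N /\ t (index tc s) = tc by apply: idx; rewrite !inE eqxx !orbT.
have [id [idt]] : (index td s <= 5)%N /\ t (index td s) = td by apply: idx; rewrite !inE eqxx !orbT.
have vx := @var2 ux 5 _ _ ia ib (u05 fst).
have vy := @var2 uy 5 _ _ ic id (u05 snd).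
rewrite /ux iat ibt in vx; rewrite /uy ict idt in vy.
rewrite big_mkord in vx; rewrite big_mkord in vy.
rewrite -[2]ger0_norm // -nrm_scale.
apply: nrm_le.
- by rewrite mulr_ge0 // subr_ge0 hta.
- by rewrite mulr_ge0 // subr_ge0 htc.
- apply: le_trans vx; rewrite ler_pM2l //; exact: ler_norm.
- apply: le_trans vy; rewrite ler_pM2l //; exact: ler_norm.
Qed.


Definition clamp (x : R) : R := if x <= 0 then 0 else if 1 <= x then 1 else x.
Definition FN (N : nat) (x : R) := \sum_(0 <= j < N) clamp (x - j%:R).

Lemma FN_E N x : FN N x = if x <= 0 then 0 else if N%:R <= x then N%:R else x.
Proof.
elim: N => [|N IH].
  rewrite /FN big_geq //; case: (lerP x 0) => // h; by rewrite ltW.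
rewrite /FN big_nat_recr //= -/(FN N x) IH /clamp mulrS.
have hN : 0 <= N%:R :> R by rewrite ler0n.
case: (lerP x 0) => h1; case: (lerP (x - N%:R) 0) => h2; case: (lerP (N%:R) x) => h3;
  case: (lerP 1 (x - N%:R)) => h4; case: (lerP (1 + N%:R) x) => h5; lra.
Qed.

Lemma FN_mono N y z : y <= z -> FN N y <= FN N z.
Proof.
move=> h; rewrite !FN_E; have hN : 0 <= N%:R :> R by rewrite ler0n.
case: (lerP y 0) => h1; case: (lerP z 0) => h2; case: (lerP (N%:R) y) => h3;
  case: (lerP (N%:R) z) => h4; lra.
Qed.

Lemma FN_lip N y z : y <= z -> FN N z - FN N y <= z - y.
Proof.
move=> h; rewrite !FN_E; have hN : 0 <= N%:R :> R by rewrite ler0n.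
case: (lerP y 0) => h1; case: (lerP z 0) => h2; case: (lerP (N%:R) y) => h3;
  case: (lerP (N%:R) z) => h4; lra.
Qed.

Lemma clamp_mono y z : y <= z -> clamp y <= clamp z.
Proof.
move=> h; rewrite /clamp.
case: (lerP y 0) => h1; case: (lerP z 0) => h2; case: (lerP 1 y) => h3;
  case: (lerP 1 z) => h4; lra.
Qed.

Lemma clamp1 x : 1 <= x -> clamp x = 1.
Proof. by move=> h; rewrite /clamp h; case: (lerP x 0) => //; lra. Qed.
Lemma clamp0 x : x <= 0 -> clamp x = 0.
Proof. by move=> h; rewrite /clamp h. Qed.

Definition gen (N : nat) (f : nat -> R) (s : R) :=
  f 0%N + \sum_(0 <= j < N) clamp (s * N%:R - j%:R) * (f j.+1 - f j).

Lemma gen_at N f i : (0 < N)%N -> (i <= N)%N -> gen N f (i%:R / N%:R) = f i.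
Proof.
move=> hN hi; rewrite /gen divfK ?pnatr_eq0 -?lt0n //.
rewrite (@big_cat_nat _ _ _ i) //=.
rewrite (@eq_big_nat _ _ _ 0 i _ (fun j => f j.+1 - f j)); last first.
  move=> j /andP[_ hj]; rewrite clamp1 ?mul1r //.
  have : (j.+1%:R <= i%:R :> R) by rewrite ler_nat.
  by rewrite mulrS; lra.
rewrite telescope_sumr // big1_seq ?addr0; first by rewrite addrC subrK.
move=> j /andP[_]; rewrite mem_index_iota => /andP[hj _].
rewrite clamp0 ?mul0r //.
have : (i%:R <= j%:R :> R) by rewrite ler_nat.
lra.
Qed.

Lemma gen_lip N f g D s t : 0 <= D ->
  (forall j, (j < N)%N -> nrm (f j.+1 - f j) (g j.+1 - g j) <= D) -> s <= t ->
  nrm (gen N f s - gen N f t) (gen N g s - gen N g t) <= N%:R * D * (t - s).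
Proof.
move=> hD hfg hst.
have e : forall h : nat -> R, gen N h s - gen N h t =
   \sum_(0 <= j < N) (clamp (s * N%:R - j%:R) - clamp (t * N%:R - j%:R)) * (h j.+1 - h j).
  move=> h; rewrite /gen opprD addrACA subrr add0r -sumrB.
  by apply: eq_bigr => j _; rewrite mulrBl.
rewrite !e; apply: le_trans (nrm_sum _ _ _ _) _.
have hN : 0 <= N%:R :> R by rewrite ler0n.
have hsN : s * N%:R <= t * N%:R by rewrite ler_wpM2r.
apply: le_trans (_ : \sum_(0 <= j < N)
   (clamp (t * N%:R - j%:R) - clamp (s * N%:R - j%:R)) * D <= _).
  apply: ler_sum_nat => j /andP[_ hj].
  rewrite nrm_scale distrC ger0_norm; last first.
    by rewrite subr_ge0 clamp_mono // lerD2r.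
  apply: ler_wpM2l; last exact: hfg.
  by rewrite subr_ge0 clamp_mono // lerD2r.
rewrite -mulr_suml sumrB -/(FN N (t * N%:R)) -/(FN N (s * N%:R)).
have := @FN_lip N _ _ hsN; have := @FN_mono N _ _ hsN => h1 h2.
have h3 : FN N (t * N%:R) - FN N (s * N%:R) <= N%:R * (t - s) by lra.
rewrite mulrAC; apply: ler_wpM2r => //.
Qed.


Lemma nrm_ge_l a b : `|a| <= nrm a b.
Proof.
rewrite -sqrtr_sqr /nrm ler_sqrt ?addr_ge0 ?sqr_ge0 // lerDl sqr_ge0 //.
Qed.
Lemma nrm_sym a b : nrm (- a) (- b) = nrm a b.
Proof. by rewrite -nrm_abs !normrN nrm_abs. Qed.
Lemma nrm_swap a b : nrm b a = nrm a b.
Proof. by rewrite /nrm addrC. Qed.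

Lemma gen_cont N f g D : 0 <= D ->
  (forall j, (j < N)%N -> nrm (f j.+1 - f j) (g j.+1 - g j) <= D) ->
  continuous (fun s => (gen N f s, gen N g s)).
Proof.
move=> hD hfg.
have key : forall s t, nrm (gen N f s - gen N f t) (gen N g s - gen N g t) <= N%:R * D * `|s - t|.
  move=> s t; case: (lerP s t) => h.
    exact: gen_lip.
  rewrite -nrm_sym !opprB.
  apply: gen_lip => //; exact: ltW.
apply: pair_cont.
  apply: (@lip_cont _ (N%:R * D)) => s t; apply: le_trans (key s t); exact: nrm_ge_l.
apply: (@lip_cont _ (N%:R * D)) => s t; apply: le_trans (key s t).
rewrite nrm_swap; exact: nrm_ge_l.
Qed.

End Aux.
Arguments low {R g}.
Arguments rect_le_diam {R a1 b1 a2 b2 p q}.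
Arguments diam_rect_le {R a1 b1 a2 b2}.
Arguments gen_cont {R N f g D}.
Arguments gen_lip {R N f g D s t}.
Arguments gen_at {R}.
Arguments len_lip {R g K}.
Arguments nrm_ge0 {R}.
Arguments edistE {R}.
Arguments gen {R}.
Arguments nrm {R}.

Theorem lemma2p2 (R : realType) (alpha : R) (n : nat)
    (P : 'I_n -> set (R * R)%type) (R0 : set (R * R)%type) :
  0 < alpha ->
  (forall i j, i != j -> P i `&` P j = set0) ->
  (forall i, connected (P i)) ->
  (forall i, fat alpha (P i)) ->
  (forall i, simple_polygon (P i)) ->
  is_arect R0 ->
  (forall i, R0 `&` P i !=set0) ->
  (forall Q, is_arect Q -> (forall i, Q `&` P i !=set0) -> diam R0 <= diam Q) ->
  ((2 * diam R0)%:E <= opt_tour_length P <= (n%:R * diam R0)%:E)%E.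
Proof.
move=> ha hdisj hconn hfat hpoly hR0 hint hmin.
have [a1 [b1 [a2 [b2 [h1 [h2 eR0]]]]]] := hR0.
have hin : forall p q, R0 p -> R0 q -> edist p q <= diam R0.
  by rewrite eR0 => p q hp hq; apply: rect_le_diam.
have diam0 : 0 <= diam R0.
  have hp : R0 (a1, a2) by rewrite eR0 /arect /= !lexx h1 h2.
  apply: le_trans (hin _ _ hp hp); exact: nrm_ge0.
apply/andP; split.
  apply: le_ereal_inf_tmp => _ [g [gc [g01 ghit]] <-].
  have [x1 [x2 [y1 [y2 [hx hy hbox hlen]]]]] := low gc g01.
  apply: le_trans hlen; rewrite lee_fin ler_pM2l //.
  apply: le_trans (diam_rect_le hx hy); apply: hmin.
    by exists x1, x2, y1, y2.
  move=> i; have [t ht hP] := ghit i; exists (g t); split => //; exact: hbox.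
case: n P hdisj hconn hfat hpoly hint hmin => [|m] P hdisj hconn hfat hpoly hint hmin.
  apply: ereal_inf_le; exists (curve_length (fun _ : R => (0 : R, 0 : R))).
    exists (fun _ : R => (0 : R, 0 : R)) => //; split.
      by apply: continuous_subspaceT => x; apply: cvg_cst.
    by split => // -[].
  rewrite mul0r; apply: len_lip => s t _.
  by rewrite edistE subrr /nrm expr0n /= addr0 sqrtr0 mul0r.
set N := m.+1.
pose pick (i : 'I_N) := projT1 (cid (hint i)).
have hpick : forall i, R0 (pick i) /\ P i (pick i).
  by move=> i; rewrite /pick; case: (cid (hint i)) => p [].
pose q (j : nat) := pick (inord (j %% N)).
pose fx j := (q j).1; pose fy j := (q j).2.
pose g s := (gen N fx s, gen N fy s).
have hD : forall j, (j < N)%N -> nrm (fx j.+1 - fx j) (fy j.+1 - fy j) <= diam R0.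
  move=> j _; apply: (hin (q j.+1) (q j)); [exact: (hpick _).1 | exact: (hpick _).1].
have hat : forall i, (i <= N)%N -> g (i%:R / N%:R) = q i.
  move=> i hi; rewrite /g !gen_at // /fx /fy; by case: (q i).
apply: ereal_inf_le; exists (curve_length g).
  exists g => //; split.
    apply: continuous_subspaceT; exact: (gen_cont diam0 hD).
  split.
    have e0 : (0 : R) = 0%:R / N%:R by rewrite mul0r.
    have e1 : (1 : R) = N%:R / N%:R by rewrite divff // pnatr_eq0.
    rewrite e0 hat // {1}e1 hat // /q modnn mod0n //.
  move=> i; exists (i%:R / N%:R).
    rewrite in_itv /= divr_ge0 ?ler0n //= ler_pdivrMr ?ltr0n // mul1r ler_nat.
    exact: ltnW.
  rewrite hat; last exact: ltnW.
  rewrite /q modn_small // inord_val; exact: (hpick i).2.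
apply: len_lip => s t hst.
rewrite edistE /g /=; exact: gen_lip.
Qed.
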